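(* For any $\sigma$-structure $\mathcal{A}$, the $\mathfrak{g}$-guarded tree-width of $\mathcal{A}$ and the $\mathfrak{g}$-guarded coalgebra number of $\mathcal{A}$ coincide.
   Context: $\mathfrak{g}$ is atom or loose guarding (for which the resource-bounded comonads $\mathbb{G}_k^{\mathfrak{g}}$ are defined). $\mathbb{G}_k^{\mathfrak{g}}\mathcal{A}$ has universe the equivalence classes $[p,a]$ of focussed plays $\langle p,a\rangle$, where $p$ is a non-empty list of $k$-guarded $\mathfrak{g}$-guarded sets of $\mathcal{A}$ and $a\in\lambda(p)$ (last element), under $\langle p,a\rangle\sim\langle q,a'\rangle$ iff $a=a'$, $p\sqcap q$ is non-empty, and $a\in\lambda(u)$ for all $u$ on the prefix-order paths from $p\sqcap q$ to $p$ and to $q$; relations $R^{\mathbb{G}_k\mathcal{A}}=\{([p,a_1],\ldots,[p,a_r])\mid R^{\mathcal{A}}(a_1,\ldots,a_r)\}$. A $\mathfrak{g}$-guarded decomposition of $\mathcal{A}$ is a map $\tau$ from $A$ to $\mathfrak{g}$-guarded plays, with image $P_\tau$, that is reflexive ($a\in\lambda(\tau(a))$), edge covering (adjacent elements in the Gaifman graph lie together in some $\lambda(p)$, $p\in P_\tau$), minimal ($[\tau(a),a]=[q,a]$ implies $\tau(a)\sqsubseteq q$) and vertex connected (for $q$ below some element of $P_\tau$ with $a\in\lambda(q)$, $[\tau(a),a]=[q,a]$); it is $k$-bounded if $|\lambda(p)|\le k$ for all $p\in P_\tau$. The $\mathfrak{g}$-guarded tree-width of $\mathcal{A}$ is the least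 $k$ such that $\mathcal{A}$ has a $k$-bounded $\mathfrak{g}$-guarded decomposition; the $\mathfrak{g}$-guarded coalgebra number is the least $k$ such that there is a coalgebra $\mathcal{A}\to\mathbb{G}_k^{\mathfrak{g}}\mathcal{A}$. *)

(* Defs.v *)
From Stdlib Require List.
From mathcomp Require Import all_boot.
Set Implicit Arguments.
Unset Strict Implicit.
Unset Printing Implicit Defensive.

Record signature := Signature { sym : Type; arity : sym -> nat }.

Record structure (s : signature) := Structure {
  car :> Type;
  rel : forall R : sym s, ('I_(arity R) -> car) -> Prop }.
Arguments rel {s} _ R _.

Definition hom (s : signature) (A B : structure s) (f : A -> B) : Prop :=
  forall (R : sym s) (t : 'I_(arity R) -> A), rel A R t -> rel B R (f \o t).

Definition image (T U : Type) (f : T -> U) (X : T -> Prop) : U -> Prop :=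
  fun y => exists x, X x /\ y = f x.

Definition card_le (T : Type) (X : T -> Prop) (k : nat) : Prop :=
  exists f : 'I_k -> T, forall x, X x -> exists i, f i = x.

Inductive guarding := AtomGuarding | LooseGuarding.

Definition singleton_set (T : Type) (X : T -> Prop) : Prop :=
  exists x, forall y, X y <-> y = x.

Definition guarded (s : signature) (g : guarding) (A : structure s) (X : A -> Prop) : Prop :=
  singleton_set X \/
  match g with
  | AtomGuarding =>
      exists (R : sym s) (t : 'I_(arity R) -> A),
        rel A R t /\ forall y, X y <-> exists i, t i = y
  | LooseGuarding =>
      forall b c, X b -> X c ->
        exists (R : sym s) (t : 'I_(arity R) -> A),
          [/\ rel A R t, (exists i, t i = b), (exists i, t i = c) & forall i, X (t i)]
  end.

Definition kguarded (s : signature) (g : guarding) (k : nat) (A : structure s)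
  (X : A -> Prop) : Prop := guarded g X /\ card_le X k.

Definition lam (T : Type) (p : seq (T -> Prop)) : T -> Prop := last (fun _ => False) p.

Definition prefix (T : Type) (r p : seq T) : Prop := exists u, p = r ++ u.

Definition is_meet (T : Type) (p q r : seq T) : Prop :=
  [/\ prefix r p, prefix r q & forall u, prefix u p -> prefix u q -> prefix u r].

Definition gplay (s : signature) (g : guarding) (A : structure s) (p : seq (A -> Prop)) : Prop :=
  p <> [::] /\ forall X, List.In X p -> guarded g X.

Definition kgplay (s : signature) (g : guarding) (k : nat) (A : structure s)
  (p : seq (A -> Prop)) : Prop :=
  p <> [::] /\ forall X, List.In X p -> kguarded g k X.

Definition play_eqv (T : Type) (x y : seq (T -> Prop) * T) : Prop :=
  let (p, a) := x in let (q, a') := y in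
  a = a' /\
  exists r, [/\ is_meet p q r, r <> [::],
     (forall u, prefix r u -> prefix u p -> lam u a) &
     (forall u, prefix r u -> prefix u q -> lam u a)].

Definition valid (s : signature) (g : guarding) (k : nat) (A : structure s)
  (x : seq (A -> Prop) * A) : Prop := kgplay g k x.1 /\ lam x.1 x.2.

(** The comonad G_k^g : universe = equivalence classes [p,a] *)
Definition Gcar (s : signature) (g : guarding) (k : nat) (A : structure s) : Type :=
  { S : seq (A -> Prop) * A -> Prop | exists x, valid g k x /\ S = play_eqv x }.

Definition is_class (s : signature) (g : guarding) (k : nat) (A : structure s)
  (c : Gcar g k A) (p : seq (A -> Prop)) (a : A) : Prop :=
  valid g k (p, a) /\ proj1_sig c = play_eqv (p, a).

Definition Gk (s : signature) (g : guarding) (k : nat) (A : structure s) : structure s :=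
  @Structure s (Gcar g k A)
    (fun R c => exists (p : seq (A -> Prop)) (t : 'I_(arity R) -> A),
                  rel A R t /\ forall j, is_class (c j) p (t j)).

(* comultiplication: delta [p,a] = [p#, [p,a]] where
   p# = [X_1', ..., X_n'] with X_i' = { [p_{<=i}, b] | b in X_i } *)
Definition sharp (s : signature) (g : guarding) (k : nat) (A : structure s)
  (p : seq (A -> Prop)) : seq (Gk g k A -> Prop) :=
  mkseq (fun i => fun c : Gk g k A =>
           exists b, nth (fun _ => False) p i b /\ is_class c (take i.+1 p) b) (size p).

Definition delta_rel (s : signature) (g : guarding) (k : nat) (A : structure s)
  (c : Gk g k A) (d : Gk g k (Gk g k A)) : Prop :=
  exists p a, is_class c p a /\ is_class d (sharp g k p) c.

Definition Gmap_rel (s : signature) (g : guarding) (k : nat) (A B : structure s)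
  (f : A -> B) (c : Gk g k A) (d : Gk g k B) : Prop :=
  exists p a, is_class c p a /\ is_class d (map (image f) p) (f a).

(* a coalgebra A -> G_k A: a homomorphism satisfying the counit and comultiplication laws *)
Definition coalgebra (s : signature) (g : guarding) (k : nat) (A : structure s)
  (alpha : A -> Gk g k A) : Prop :=
  [/\ hom alpha,
      (forall a, exists p, is_class (alpha a) p a) &
      (forall a, exists d : Gk g k (Gk g k A),
          delta_rel (alpha a) d /\ Gmap_rel alpha (alpha a) d)].

Definition has_coalgebra (s : signature) (g : guarding) (k : nat) (A : structure s) : Prop :=
  exists alpha : A -> Gk g k A, coalgebra alpha.

Definition gaifman_adj (s : signature) (A : structure s) (a b : A) : Prop :=
  a <> b /\ exists (R : sym s) (t : 'I_(arity R) -> A),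
    [/\ rel A R t, (exists i, t i = a) & (exists i, t i = b)].

Definition decomposition (s : signature) (g : guarding) (A : structure s)
  (tau : A -> seq (A -> Prop)) : Prop :=
  [/\ (forall a, gplay g (tau a)),
      (forall a, lam (tau a) a),
      (forall a b, gaifman_adj a b -> exists c, lam (tau c) a /\ lam (tau c) b),
      (forall a q, gplay g q -> play_eqv (tau a, a) (q, a) -> prefix (tau a) q) &
      (forall a b q, gplay g q -> prefix q (tau b) -> lam q a ->
                     play_eqv (tau a, a) (q, a))].

Definition kbounded (s : signature) (A : structure s) (k : nat)
  (tau : A -> seq (A -> Prop)) : Prop :=
  forall c, card_le (lam (tau c)) k.

Definition has_decomp (s : signature) (g : guarding) (k : nat) (A : structure s) : Prop :=
  exists tau : A -> seq (A -> Prop), decomposition g tau /\ kbounded k tau.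

Definition is_guarded_treewidth (s : signature) (g : guarding) (A : structure s) (n : nat) : Prop :=
  has_decomp g n A /\ forall j, has_decomp g j A -> n <= j.

Definition is_coalgebra_number (s : signature) (g : guarding) (A : structure s) (n : nat) : Prop :=
  has_coalgebra g n A /\ forall j, has_coalgebra g j A -> n <= j.

(* Main.v *)
Require Import Defs.
From mathcomp Require Import all_boot.
From Stdlib Require Import Classical ClassicalEpsilon FunctionalExtensionality PropExtensionality ProofIrrelevance.
From mathcomp Require Import zify.
Require Import Defs.
Set Implicit Arguments. Unset Strict Implicit. Unset Printing Implicit Defensive.

Section Prefix.
Variable T : Type.
Implicit Types p q r u v w : seq T.

Lemma pf_refl p : prefix p p. Proof. by exists [::]; rewrite cats0. Qed.
Lemma pf_trans r p q : prefix r p -> prefix p q -> prefix r q.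
Proof. by move=> [u ->] [v ->]; exists (u ++ v); rewrite catA. Qed.
Lemma pf_nil p : prefix [::] p. Proof. by exists p. Qed.
Lemma pf_size r p : prefix r p -> size r <= size p.
Proof. by move=> [u ->]; rewrite size_cat leq_addr. Qed.
Lemma pfE r p : prefix r p <-> r = take (size r) p.
Proof.
split; first by move=> [u ->]; rewrite take_size_cat.
by move=> E; exists (drop (size r) p); rewrite {1}E cat_take_drop.
Qed.
Lemma pf_take i p : prefix (take i p) p.
Proof. by exists (drop i p); rewrite cat_take_drop. Qed.
Lemma pf_antisym r p : prefix r p -> prefix p r -> r = p.
Proof.
move=> H1 H2; have a := pf_size H1; have b := pf_size H2.
move/pfE: H1 => ->.
have -> : size r = size p by apply/eqP; rewrite eqn_leq a b.
by rewrite take_size.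
Qed.
Lemma pf_le r s p : prefix r p -> prefix s p -> size r <= size s -> prefix r s.
Proof.
move=> /pfE Er /pfE Es H; apply/pfE.
by rewrite [in RHS]Es take_takel.
Qed.
Lemma pf_comp r s p : prefix r p -> prefix s p -> prefix r s \/ prefix s r.
Proof.
move=> H1 H2; case: (leqP (size r) (size s)) => H.
  by left; apply: pf_le H1 H2 H.
by right; apply: pf_le H2 H1 (ltnW H).
Qed.
Lemma pf_nilE p : prefix p [::] -> p = [::].
Proof. by move/pf_size; case: p. Qed.
Lemma pf_cons x y p q : prefix (x :: p) (y :: q) -> x = y /\ prefix p q.
Proof. by move=> [u [-> ->]]; split => //; exists u. Qed.
Lemma pf_cons2 x p q : prefix p q -> prefix (x :: p) (x :: q).
Proof. by move=> [u ->]; exists u. Qed.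

Lemma meet_ex p q : exists r, is_meet p q r.
Proof.
elim: p q => [|x p IH] q.
  exists [::]; split; [exact: pf_nil| exact: pf_nil|].
  by move=> u /pf_nilE -> _; exact: pf_nil.
case: q => [|y q].
  exists [::]; split; [exact: pf_nil| exact: pf_nil|].
  by move=> u _ /pf_nilE ->; exact: pf_nil.
case: (classic (x = y)) => [<-|nxy].
  have [r [H1 H2 H3]] := IH q.
  exists (x :: r); split; [exact: pf_cons2 H1| exact: pf_cons2 H2|].
  move=> [|z u]; first by move=> *; exact: pf_nil.
  move=> /pf_cons [-> Hp] /pf_cons [_ Hq]; apply: pf_cons2; exact: H3.
exists [::]; split; [exact: pf_nil| exact: pf_nil|].
move=> [|z u]; first by move=> *; exact: pf_nil.
by move=> /pf_cons [-> _] /pf_cons [E _].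
Qed.

Lemma meet_sym p q r : is_meet p q r -> is_meet q p r.
Proof. by move=> [H1 H2 H3]; split => // u A B; apply: H3. Qed.

Lemma meet_of_prefix p q : prefix p q -> is_meet p q p.
Proof. by move=> H; split; [exact: pf_refl | exact: H | move=> u A _]. Qed.

Lemma meet_uniq p q r r' : is_meet p q r -> is_meet p q r' -> r = r'.
Proof.
move=> [A B C] [D E F]; apply: pf_antisym; [exact: F| exact: C].
Qed.

Lemma lam_take (p : seq (T -> Prop)) j : 0 < j <= size p ->
  lam (take j p) = nth (fun _ => False) p j.-1.
Proof.
case: j => // j /andP [_ H].
by rewrite /lam (take_nth (fun _ => False) H) last_rcons.
Qed.

Lemma In_nth x0 (s : seq T) i : i < size s -> List.In (nth x0 s i) s.
Proof.
elim: s i => [|x s IH] [|i] //= H; [by left| right; exact: IH].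
Qed.

Lemma In_last x0 (s : seq T) : s <> [::] -> List.In (last x0 s) s.
Proof.
case/lastP: s => [//|s x] _; rewrite last_rcons -cats1.
by apply: List.in_or_app; right; left.
Qed.

Lemma In_prefix x r p : prefix r p -> List.In x r -> List.In x p.
Proof. by move=> [u ->] H; apply: List.in_or_app; left. Qed.

End Prefix.

Lemma In_map (T U : Type) (f : T -> U) (s : seq T) y :
  List.In y (map f s) -> exists x, List.In x s /\ y = f x.
Proof.
elim: s => [|x s IH] //= [<-|H]; first by exists x; split=> //; left.
by have [z [Hz ->]] := IH H; exists z; split=> //; right.
Qed.

Section Eqv.
Variable T : Type.
Implicit Types p q r u v w : seq (T -> Prop).
Implicit Types a b c : T.
Implicit Types x y z : seq (T -> Prop) * T.

Lemma peqv_refl p a : p <> [::] -> lam p a -> play_eqv (p, a) (p, a).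
Proof.
move=> Hp Ha; split=> //; exists p; split => //.
  exact: meet_of_prefix (pf_refl p).
all: by move=> u H1 H2; rewrite (pf_antisym H2 H1).
Qed.

Lemma peqv_sym x y : play_eqv x y -> play_eqv y x.
Proof.
case: x => p a; case: y => q b /= [-> [r [M N H1 H2]]]; split=> //.
by exists r; split=> //; exact: meet_sym.
Qed.

Lemma peqv_trans_aux p q w a r1 r2 :
  is_meet p q r1 -> is_meet q w r2 -> r1 <> [::] -> prefix r1 r2 ->
  (forall u, prefix r1 u -> prefix u p -> lam u a) ->
  (forall u, prefix r1 u -> prefix u q -> lam u a) ->
  (forall u, prefix r2 u -> prefix u w -> lam u a) ->
  play_eqv (p, a) (w, a).
Proof.
move=> [A1 B1 C1] [A2 B2 C2] N12 H12 Hp Hq Hw; split=> //.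
have [r3 [A3 B3 C3]] := meet_ex p w.
have H13 : prefix r1 r3 by apply: C3 => //; exact: pf_trans H12 B2.
exists r3; split=> //.
- by move=> E; subst r3; apply: N12; exact: pf_nilE.
- by move=> u H1 H2; apply: Hp => //; exact: pf_trans H13 H1.
move=> u H1 H2; case: (pf_comp H2 B2) => H.
  apply: Hq; first exact: pf_trans H13 H1.
  exact: pf_trans H A2.
exact: Hw.
Qed.

Lemma peqv_trans x y z : play_eqv x y -> play_eqv y z -> play_eqv x z.
Proof.
case: x => p a; case: y => q b; case: z => w c /=.
move=> [<- [r1 [M1 N1 H1 H1']]] [<- [r2 [M2 N2 H2 H2']]].
change (play_eqv (p, a) (w, a)).
have [_ P1 _] := M1; have [P2 _ _] := M2.
case: (pf_comp P1 P2) => H.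
  exact: peqv_trans_aux M1 M2 N1 H H1 H1' H2'.
apply: peqv_sym.
exact: peqv_trans_aux (meet_sym M2) (meet_sym M1) N2 H H2' H2 H1.
Qed.

Lemma peqv_ext x y : play_eqv x y -> play_eqv x = play_eqv y.
Proof.
move=> H; apply: functional_extensionality => z.
apply: propositional_extensionality; split => H'.
  exact: peqv_trans (peqv_sym H) H'.
exact: peqv_trans H H'.
Qed.

Lemma peqv_prefix p q a : prefix p q -> p <> [::] ->
  (forall u, prefix p u -> prefix u q -> lam u a) -> play_eqv (p, a) (q, a).
Proof.
move=> H N Hu; split=> //; exists p; split=> //.
  exact: meet_of_prefix.
by move=> u H1 H2; rewrite (pf_antisym H2 H1); apply: Hu => //; exact: pf_refl.
Qed.

Lemma peqv_prefix_inv p q a b : play_eqv (p, a) (q, b) -> prefix p q ->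
  a = b /\ forall u, prefix p u -> prefix u q -> lam u a.
Proof.
move=> [-> [r [M N H1 H2]]] H; split=> // u A B.
have E := meet_uniq M (meet_of_prefix H); subst r; exact: H2.
Qed.

End Eqv.
Lemma ex_min (P : nat -> Prop) n : P n -> exists m, P m /\ forall j, P j -> m <= j.
Proof.
elim: n {-2}n (leqnn n) => [|n IH] m Hm Pm.
  exists m; split=> // j _; by move: Hm; rewrite leqn0 => /eqP ->.
case: (classic (exists j, j < m /\ P j)) => [[j [Hj Pj]]|N].
  by apply: (IH j) => //; rewrite -ltnS; apply: leq_trans Hj Hm.
exists m; split=> // j Pj; rewrite leqNgt; apply/negP => H; apply: N; by exists j.
Qed.

Section Gen.
Variables (s : signature) (g : guarding) (k : nat) (A : structure s).
Local Notation GA := (Gcar g k A).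
Implicit Types (x : seq (A -> Prop) * A) (p q : seq (A -> Prop)) (a b : A).

Definition mkG (x : seq (A -> Prop) * A) (h : valid g k x) : GA :=
  exist _ (play_eqv x) (ex_intro _ x (conj h erefl)).

Lemma Gext (c d : GA) : proj1_sig c = proj1_sig d -> c = d.
Proof.
case: c => S HS; case: d => S' HS' /= E; subst S'.
by f_equal; apply: proof_irrelevance.
Qed.

Lemma valid_refl x : valid g k x -> play_eqv x x.
Proof. by case: x => p a [[Hp _] Ha]; exact: peqv_refl. Qed.

Lemma is_class_pt (c : GA) p a q b :
  is_class c p a -> is_class c q b -> a = b /\ play_eqv (p, a) (q, b).
Proof.
move=> [_ E1] [V2 E2].
have H : play_eqv (p, a) (q, b) by rewrite -E1 E2; exact: valid_refl V2.
by split=> //; case: H.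
Qed.

Lemma kgplay_prefix q p : kgplay g k p -> prefix q p -> q <> [::] -> kgplay g k q.
Proof. by move=> [_ H] Hq N; split=> // X HX; apply: H; exact: In_prefix Hq HX. Qed.

End Gen.

Section CoalgToDecomp.
Variables (s : signature) (g : guarding) (k : nat) (A : structure s).
Variable alpha : A -> Gk g k A.
Hypothesis Hc : coalgebra alpha.
Implicit Types (p q r u : seq (A -> Prop)) (a b c : A).

Lemma c_hom : hom alpha. Proof. by case: Hc. Qed.
Lemma c_counit a : exists p, is_class (alpha a) p a. Proof. by case: Hc. Qed.
Lemma c_comult a : exists d : Gk g k (Gk g k A),
  delta_rel (alpha a) d /\ Gmap_rel alpha (alpha a) d.
Proof. by case: Hc. Qed.

Definition pa a := proj1_sig (constructive_indefinite_description _ (c_counit a)).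
Lemma pa_class a : is_class (alpha a) (pa a) a.
Proof. exact: proj2_sig (constructive_indefinite_description _ (c_counit a)). Qed.

Definition good a r :=
  [/\ r <> [::], prefix r (pa a) & forall u, prefix r u -> prefix u (pa a) -> lam u a].

Lemma tau_ex a : exists r, good a r /\ forall r', good a r' -> size r <= size r'.
Proof.
have G : good a (pa a).
  have [[[N _] Hl] _] := pa_class a.
  split=> //; first exact: pf_refl.
  by move=> u H1 H2; rewrite (pf_antisym H2 H1).
have [m [[r [Gr Er]] Hm]] := @ex_min (fun m => exists r, good a r /\ size r = m)
   (size (pa a)) (ex_intro _ (pa a) (conj G erefl)).
exists r; split=> // r' Gr'; rewrite Er; apply: Hm; by exists r'.
Qed.

Definition tau a := proj1_sig (constructive_indefinite_description _ (tau_ex a)).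
Lemma tau_spec a : good a (tau a) /\ forall r', good a r' -> size (tau a) <= size r'.
Proof. exact: proj2_sig (constructive_indefinite_description _ (tau_ex a)). Qed.

Lemma CAN a q : play_eqv (tau a, a) (q, a) -> prefix (tau a) q.
Proof.
have [[N Hp Hl] Hmin] := tau_spec a.
move=> [_ [r [[R1 R2 R3] Nr H1 H2]]].
suff E : r = tau a by rewrite -E.
apply: (pf_antisym R1).
apply: (pf_le Hp (pf_trans R1 Hp)).
apply: Hmin; split=> //; first exact: pf_trans R1 Hp.
move=> u Hu1 Hu2; case: (pf_comp Hu2 Hp) => H.
  exact: H1.
exact: Hl.
Qed.

Lemma tau_peqv a : play_eqv (tau a, a) (pa a, a).
Proof. have [[N Hp Hl] _] := tau_spec a; exact: peqv_prefix. Qed.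

Lemma tau_valid a : valid g k (tau a, a).
Proof.
have [[N Hp Hl] _] := tau_spec a; have [[Hk _] _] := pa_class a.
split; first exact: kgplay_prefix Hk Hp N.
by apply: Hl; [exact: pf_refl | ].
Qed.

Lemma tau_class a : is_class (alpha a) (tau a) a.
Proof.
split; first exact: tau_valid.
have [_ ->] := pa_class a; apply: esym; apply: peqv_ext; exact: tau_peqv.
Qed.

Lemma star b q c : q <> [::] -> prefix q (tau b) -> lam q c ->
  proj1_sig (alpha c) = play_eqv (q, c).
Proof.
move=> Nq Hq Hqc.
have [d [[p1 [a1 [H1 Hd1]]] [p2 [a2 [H2 Hd2]]]]] := c_comult b.
have [E1 Hpe1] := is_class_pt H1 (tau_class b); subst a1.
have Htp1 : prefix (tau b) p1 by apply: CAN; exact: peqv_sym.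
have [E2 Hpe2] := is_class_pt Hd1 Hd2.
move: Hpe2 => [_ [r [[R1 R2 R3] Nr Hr1 Hr2]]].
have [[Hk1 _] _] := H1.
have m_gt0 : 0 < size r by case: (r) Nr.
have m_le : size r <= size p1.
  by have := pf_size R1; rewrite /sharp size_mkseq.
have clA : forall j, size r <= j <= size p1 -> lam (take j p1) b.
  move=> j /andP [Hj1 Hj2].
  have Hsz : size (take j (sharp g k p1)) = j by rewrite size_takel // /sharp size_mkseq.
  have HL : lam (take j (sharp g k p1)) (alpha b).
    apply: Hr1; last exact: pf_take.
    by apply: pf_le R1 (pf_take _ _) _; rewrite Hsz.
  rewrite lam_take in HL; last by rewrite /sharp size_mkseq; apply/andP; split; lia.
  rewrite /sharp nth_mkseq in HL; last by lia.
  case: HL => b' [Hb' Hcl].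
  have [Eb _] := is_class_pt Hcl (tau_class b); subst b'.
  rewrite lam_take //; apply/andP; split; lia.
have clB : size (tau b) <= size r.
  rewrite leqNgt; apply/negP => Hlt.
  have Pm : prefix (take (size r) p1) (tau b).
    by apply: pf_le (pf_take _ _) Htp1 _; rewrite size_takel //; exact: ltnW.
  have Nm : take (size r) p1 <> [::].
    by move=> E; move: (congr1 size E); rewrite size_takel //= => H0; rewrite H0 in m_gt0.
  have Heq : play_eqv (take (size r) p1, b) (tau b, b).
    apply: peqv_prefix Pm Nm _ => u Hu1 Hu2.
    have Hup : prefix u p1 := pf_trans Hu2 Htp1.
    have Eu := (pfE u p1).1 Hup; rewrite Eu; apply: clA.
    have := pf_size Hu1; have := pf_size Hu2; have := pf_size Htp1.
    rewrite size_takel //; move=> *; apply/andP; split; lia.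
  by have := pf_size (CAN (peqv_sym Heq)); rewrite size_takel //; lia.
have Hqp1 : prefix q p1 := pf_trans Hq Htp1.
have i_gt0 : 0 < size q by case: (q) Nq.
have i_le : size q <= size r by have := pf_size Hq; lia.
have Eq : take (size q) p1 = q by apply: esym; apply/pfE.
have Vq : valid g k (q, c) by split; [exact: kgplay_prefix Hk1 Hqp1 Nq | exact: Hqc].
have Cx : is_class (mkG Vq) q c by split.
have Hnth : nth (fun _ => False) p1 (size q).-1 c.
  have L := @lam_take _ p1 (size q); rewrite Eq in L; rewrite -L //.
  apply/andP; split; lia.
have Hx : nth (fun _ => False) (sharp g k p1) (size q).-1 (mkG Vq).
  rewrite /sharp nth_mkseq; last by lia.
  by exists c; split => //; rewrite prednK // Eq.
have Hmeet : nth (fun _ => False) (sharp g k p1) (size q).-1 =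
             nth (fun _ => False) (map (image alpha) p2) (size q).-1.
  have Hlt : (size q).-1 < size r by lia.
  by move: R1 R2 => [v1 ->] [v2 ->]; rewrite !nth_cat Hlt.
rewrite Hmeet in Hx.
have Hsz2 : (size q).-1 < size p2 by have := pf_size R2; rewrite size_map; lia.
rewrite (nth_map (fun _ => False)) // in Hx.
case: Hx => y [Hy Exy].
rewrite Exy in Cx.
have [Ecy _] := is_class_pt Cx (tau_class y); subst y.
by rewrite -Exy.
Qed.

Lemma c_decomp : decomposition g tau /\ kbounded k tau.
Proof.
split; last first.
  move=> a; have [[N H] _] := tau_valid a; exact: (H _ (In_last _ N)).2.
split.
- move=> a; have [[N H] _] := tau_valid a; split=> // X HX; exact: (H X HX).1.
- by move=> a; have [_ H] := tau_valid a.
- move=> a b [_ [R [t [Ht [i Ei] [j Ej]]]]].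
  have [p [t' [Ht' Hcl]]] := c_hom Ht.
  have Ca := Hcl i; have Cb := Hcl j; rewrite /= Ei in Ca; rewrite /= Ej in Cb.
  have [Ea Pa] := is_class_pt (tau_class a) Ca; rewrite -Ea in Pa.
  have [Eb Pb] := is_class_pt (tau_class b) Cb; rewrite -Eb in Pb.
  have Ta := CAN Pa; have Tb := CAN Pb.
  have [_ La] := peqv_prefix_inv Pa Ta; have [_ Lb] := peqv_prefix_inv Pb Tb.
  case: (pf_comp Ta Tb) => H.
    exists b; split; first exact: La.
    by have [_ ?] := tau_valid b.
  exists a; split; last exact: Lb.
  by have [_ ?] := tau_valid a.
- by move=> a q _ H; exact: CAN H.
move=> a b q [Nq _] Hq Ha.
have E := star Nq Hq Ha.
have [_ E'] := tau_class a.
rewrite -E' E; exact: peqv_refl.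
Qed.

End CoalgToDecomp.

Lemma coalg_decomp (s : signature) (g : guarding) (k : nat) (A : structure s) :
  has_coalgebra g k A -> has_decomp g k A.
Proof. by move=> [alpha H]; exists (tau H); exact: c_decomp. Qed.
Lemma last_map_ne (T U : Type) (f : T -> U) d d' (s : seq T) :
  s <> [::] -> last d (map f s) = f (last d' s).
Proof. by case/lastP: s => // s x _; rewrite map_rcons !last_rcons. Qed.

Lemma kg_image (s : signature) (g : guarding) (k : nat) (A B : structure s)
  (f : A -> B) (X : A -> Prop) : hom f -> kguarded g k X -> kguarded g k (image f X).
Proof.
move=> Hf [HG [h Hh]]; split; last first.
  exists (f \o h) => y [x [Hx ->]]; have [i Hi] := Hh x Hx; exists i; by rewrite /= Hi.
case: HG => [[x Hx]|HG]; [left | right].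
  exists (f x) => y; split => [[z [Hz ->]]|->]; first by rewrite ((Hx z).1 Hz).
  by exists x; split => //; exact: (Hx x).2.
case: g HG => HG.
  have [R [t [Ht Et]]] := HG; exists R, (f \o t); split; first exact: Hf.
  move=> y; split.
    move=> [z [Hz ->]]; have [i Hi] := (Et z).1 Hz; exists i; by rewrite /= Hi.
  move=> [i <-]; exists (t i); split => //; apply: (Et _).2; by exists i.
move=> b c [x [Hx ->]] [y [Hy ->]].
have [R [t [Ht [i Hi] [j Hj] Hall]]] := HG x y Hx Hy.
exists R, (f \o t); split; first exact: Hf.
- by exists i; rewrite /= Hi.
- by exists j; rewrite /= Hj.
by move=> l; exists (t l); split.
Qed.

Section DecompToCoalg.
Variables (s : signature) (g : guarding) (k : nat) (A : structure s).
Variable tau : A -> seq (A -> Prop).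
Hypothesis Hd : decomposition g tau.
Hypothesis Hbd : kbounded k tau.
Implicit Types (p q r u w : seq (A -> Prop)) (a b c e : A).

Lemma d_gplay a : gplay g (tau a). Proof. by case: Hd => H _ _ _ _; exact: H. Qed.
Lemma d_refl a : lam (tau a) a. Proof. by case: Hd => _ H _ _ _; exact: H. Qed.
Lemma d_edge a b : gaifman_adj a b -> exists c, lam (tau c) a /\ lam (tau c) b.
Proof. by case: Hd => _ _ H _ _; exact: H. Qed.
Lemma d_min a q : gplay g q -> play_eqv (tau a, a) (q, a) -> prefix (tau a) q.
Proof. by case: Hd => _ _ _ H _; exact: H. Qed.
Lemma d_vc a b q : gplay g q -> prefix q (tau b) -> lam q a -> play_eqv (tau a, a) (q, a).
Proof. by case: Hd => _ _ _ _ H; exact: H. Qed.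
Lemma d_ne a : tau a <> [::]. Proof. by case: (@d_gplay a). Qed.

Lemma gplay_prefix q p : gplay g p -> prefix q p -> q <> [::] -> gplay g q.
Proof. by move=> [_ H] Hq N; split=> // X HX; apply: H; exact: In_prefix Hq HX. Qed.

Lemma D1 b w c : w <> [::] -> prefix w (tau c) -> lam w b ->
  prefix (tau b) w /\ forall v, prefix (tau b) v -> prefix v w -> lam v b.
Proof.
move=> Nw Hw Hb'.
have Gw := gplay_prefix (@d_gplay c) Hw Nw.
have H := d_vc Gw Hw Hb'.
have T := d_min Gw H.
by split=> //; have [_ ?] := peqv_prefix_inv H T.
Qed.

Definition Pb q : bool :=
  if excluded_middle_informative (exists c, tau c = q) then true else false.
Lemma PbP q : Pb q -> exists c, tau c = q.
Proof. by rewrite /Pb; case: excluded_middle_informative. Qed.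
Lemma PbT a : Pb (tau a).
Proof. rewrite /Pb; case: excluded_middle_informative => // N; exfalso; apply: N; by exists a. Qed.

Definition pref p := mkseq (fun i => take i.+1 p) (size p).
Definition C p := filter Pb (pref p).
Definition tau' a := map (@lam A) (C (tau a)).

Lemma pref_rcons p x : pref (rcons p x) = rcons (pref p) (rcons p x).
Proof.
rewrite /pref size_rcons mkseqS take_oversize ?size_rcons //.
congr rcons; rewrite /mkseq; apply/eq_in_map => i; rewrite mem_iota add0n => /andP [_ Hi].
by rewrite -cats1 takel_cat.
Qed.

Lemma C_rcons p x : C (rcons p x) = if Pb (rcons p x) then rcons (C p) (rcons p x) else C p.
Proof. by rewrite /C pref_rcons filter_rcons. Qed.

Lemma C_prefix0 p v : prefix (C p) (C (p ++ v)).
Proof.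
elim/last_ind: v => [|v x IH]; first by rewrite cats0; exact: pf_refl.
rewrite -rcons_cat C_rcons; case: Pb => //.
apply: (pf_trans IH); exists [:: rcons (p ++ v) x]; by rewrite cats1.
Qed.

Lemma C_prefix p p' : prefix p p' -> prefix (C p) (C p').
Proof. by move=> [v ->]; exact: C_prefix0. Qed.

Lemma C_In p w : List.In w (C p) -> Pb w /\ prefix w p /\ w <> [::].
Proof.
elim/last_ind: p => [|p x IH] //=.
have Hpx : prefix p (rcons p x) by exists [:: x]; rewrite cats1.
rewrite C_rcons; case E: (Pb (rcons p x)) => H.
  rewrite -cats1 in H; case: (List.in_app_or _ _ _ H) => [H'|[<-|[]]].
    have [? [? ?]] := IH H'; split=> //; split=> //; exact: pf_trans Hpx.
  by split=> //; split; [exact: pf_refl| case: (p)].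
have [? [? ?]] := IH H; split=> //; split=> //; exact: pf_trans Hpx.
Qed.

Lemma C_last p d : Pb p -> p <> [::] -> C p <> [::] /\ last d (C p) = p.
Proof.
case/lastP: p => [//|p x]; rewrite C_rcons => -> _.
by split; [case: (C p) | rewrite last_rcons].
Qed.

Lemma C_take p i : i < size (C p) -> take i.+1 (C p) = C (nth [::] (C p) i).
Proof.
elim/last_ind: p i => [|p x IH] i //.
rewrite C_rcons; case E: (Pb (rcons p x)) => Hi; last exact: IH.
rewrite size_rcons ltnS leq_eqVlt in Hi; case/orP: Hi => [/eqP ->|Hi].
  by rewrite nth_rcons ltnn eqxx take_oversize ?size_rcons // C_rcons E.
by rewrite nth_rcons Hi -cats1 takel_cat //; exact: IH.
Qed.

Lemma Ctau a : C (tau a) <> [::] /\ last [::] (C (tau a)) = tau a.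
Proof. exact: C_last [::] (@PbT a) (@d_ne a). Qed.

Lemma lam_tau' a : lam (tau' a) = lam (tau a).
Proof.
have [N L] := Ctau a; rewrite /lam /tau' (last_map_ne _ _ [::] N).
by rewrite -/(lam _) L.
Qed.

Lemma G0 e b : lam (tau e) b -> play_eqv (tau' b, b) (tau' e, b).
Proof.
move=> H.
have [Tbe Lbe] := D1 (@d_ne e) (pf_refl _) H.
have [Cb_ne Cb_last] := @Ctau b.
apply: peqv_prefix.
- rewrite /tau'; move: (C_prefix Tbe) => [v ->]; rewrite map_cat; by exists (map (@lam A) v).
- by rewrite /tau'; case: (C (tau b)) Cb_ne.
move=> u Hu1 Hu2.
have Eu : u = map (@lam A) (take (size u) (C (tau e))) by rewrite map_take; exact/pfE.
have Szb : 0 < size (C (tau b)) by case: (C (tau b)) Cb_ne.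
have j_gt0 : 0 < size u by have := pf_size Hu1; rewrite /tau' size_map; lia.
have j_le : size u <= size (C (tau e)) by have := pf_size Hu2; rewrite /tau' size_map.
have Ht : take (size u) (C (tau e)) = C (nth [::] (C (tau e)) (size u).-1).
  by rewrite -{1}(prednK j_gt0); apply: C_take; lia.
have Hw'in : List.In (nth [::] (C (tau e)) (size u).-1) (C (tau e)) by apply: In_nth; lia.
move: Ht Hw'in; set w' := nth [::] (C (tau e)) (size u).-1 => Ht Hw'in.
have [Pw' [Pw'e Nw']] := C_In Hw'in.
have Hcb : prefix (C (tau b)) (C w').
  rewrite -Ht; apply: pf_le (C_prefix Tbe) (pf_take _ _) _.
  by rewrite size_takel //; have := pf_size Hu1; rewrite /tau' size_map.
have Hbin : List.In (tau b) (C w').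
  by apply: In_prefix Hcb _; rewrite -{1}Cb_last; exact: In_last.
have [_ [Tbw' _]] := C_In Hbin.
have [Cw_ne Cw_last] := C_last [::] Pw' Nw'.
rewrite Eu Ht /lam (last_map_ne _ _ [::] Cw_ne) Cw_last.
exact: Lbe Tbw' Pw'e.
Qed.

Lemma G a i b : i < size (C (tau a)) -> lam (nth [::] (C (tau a)) i) b ->
  play_eqv (tau' b, b) (take i.+1 (tau' a), b).
Proof.
move=> Hi H.
have [Pw _] := C_In (In_nth [::] Hi).
case: (PbP Pw) => e Ee.
by rewrite /tau' -map_take C_take // -Ee; rewrite -Ee in H; exact: G0.
Qed.

Lemma tau'_kgplay a : kgplay g k (tau' a).
Proof.
have [N _] := @Ctau a.
split; first by rewrite /tau'; case: (C (tau a)) N.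
move=> X HX; have [w [Hw EX]] := In_map HX; subst X.
have [Pw _] := C_In Hw; case: (PbP Pw) => c <-.
split; last exact: Hbd.
have [Nc Hc] := d_gplay c; apply: Hc; exact: In_last.
Qed.

Lemma tau'_valid a : valid g k (tau' a, a).
Proof. by split; [exact: tau'_kgplay | rewrite /= lam_tau'; exact: d_refl]. Qed.

Definition alpha a : Gk g k A := mkG (@tau'_valid a).

Lemma d_hom : hom alpha.
Proof.
move=> R t Ht.
case: (classic (exists j : 'I_(arity R), True)) => [[j0 _]|N]; last first.
  exists [::], t; split=> // j; exfalso; apply: N; by exists j.
pose F j := size (tau (t j)).
case: (@arg_maxnP _ j0 xpredT F isT) => x _ Hmax.
exists (tau' (t x)), t; split=> // j.
have Hin : lam (tau (t x)) (t j).
  case: (classic (t j = t x)) => [->|Hne]; first exact: d_refl.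
  have [c [Hc1 Hc2]] : exists c, lam (tau c) (t j) /\ lam (tau c) (t x).
    apply: d_edge; split=> //; exists R, t; split=> //; [by exists j| by exists x].
  have [T1 L1] := D1 (@d_ne c) (pf_refl _) Hc1.
  have [T2 L2] := D1 (@d_ne c) (pf_refl _) Hc2.
  apply: (L1 _ _ T2); apply: (pf_le T1 T2); exact: (Hmax j isT).
split.
  by split; [exact: tau'_kgplay | rewrite /= lam_tau'; exact: Hin].
by rewrite /=; apply: peqv_ext; exact: G0.
Qed.

Lemma sharp_eq a : sharp g k (tau' a) = map (image alpha) (tau' a).
Proof.
apply: (@eq_from_nth _ (fun _ => False)); first by rewrite size_mkseq size_map.
move=> i; rewrite size_mkseq => Hi.
rewrite nth_mkseq // (nth_map (fun _ => False)) //.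
have HiC : i < size (C (tau a)) by rewrite /tau' size_map in Hi.
have En : nth (fun _ => False) (tau' a) i = lam (nth [::] (C (tau a)) i).
  by rewrite /tau' (nth_map [::]).
apply: functional_extensionality => c; apply: propositional_extensionality; split.
  move=> [b [Hb [_ Hcl]]]; exists b; split=> //; apply: Gext.
  rewrite Hcl /=; apply: esym; apply: peqv_ext; apply: G => //; by rewrite -En.
move=> [b [Hb ->]]; exists b; split=> //; split.
  split; first apply: (kgplay_prefix (@tau'_kgplay a) (pf_take _ _)).
    by move=> E; move: (congr1 size E); rewrite size_takel.
  by rewrite /= lam_take ?Hi.
by rewrite /=; apply: peqv_ext; apply: G => //; rewrite -En.
Qed.

Lemma d_coalg : coalgebra alpha.
Proof.
split; first exact: d_hom.
  by move=> a; exists (tau' a); split=> //; exact: tau'_valid.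
move=> a.
have [N _] := @Ctau a.
have Nt : tau' a <> [::] by rewrite /tau'; case: (C (tau a)) N.
have V : valid g k (sharp g k (tau' a), alpha a).
  rewrite sharp_eq; split.
    split; first by case: (tau' a) Nt.
    move=> X HX; have [Y [HY EX]] := In_map HX; subst X; apply: kg_image d_hom _.
    exact: (@tau'_kgplay a).2 Y HY.
  rewrite /= /lam (last_map_ne _ _ (fun _ => False) Nt) -/(lam _).
  by exists a; split => //; rewrite lam_tau'; exact: d_refl.
exists (mkG V); split.
  exists (tau' a), a; split; [by split=> //; exact: tau'_valid | by split].
exists (tau' a), a; split; first by split=> //; exact: tau'_valid.
by split; [rewrite -sharp_eq; exact: V | rewrite /= sharp_eq].
Qed.

End DecompToCoalg.

Lemma decomp_coalg (s : signature) (g : guarding) (k : nat) (A : structure s) :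
  has_decomp g k A -> has_coalgebra g k A.
Proof. by move=> [tau [H1 H2]]; exists (alpha H1 H2); exact: d_coalg. Qed.

Lemma equiv_k (s : signature) (g : guarding) (k : nat) (A : structure s) :
  has_decomp g k A <-> has_coalgebra g k A.
Proof. by split; [exact: decomp_coalg | exact: coalg_decomp]. Qed.

Theorem theorem4p14 (s : signature) (g : guarding) (A : structure s) (n : nat) :
  is_guarded_treewidth g A n <-> is_coalgebra_number g A n.
Proof.
rewrite /is_guarded_treewidth /is_coalgebra_number.
split=> [[H1 H2]|[H1 H2]]; split.
- exact/equiv_k.
- by move=> j /equiv_k; exact: H2.
- exact/equiv_k.
- by move=> j /equiv_k; exact: H2.
Qed.
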